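(* Let $G=(\Sigma,S,s_0,\delta)$ be a regular commutative grammar, let $n\in\mathbb{N}$, and let $D$ be a run of $G$ such that $\|D\|>1+n|\delta|$. Then $D=D_1+nC$, where $D_1$ is a run of $G$, $C$ is a simple cycle, and $\mathrm{supp}(D_1)=\mathrm{supp}(D)$.
   Context: For $v\in\mathbb{N}^X$, $|v|=\sum_x v(x)$ and $\|v\|=\max_x v(x)$. A commutative grammar is $G=(\Sigma,S,s_0,\delta)$ with finite alphabet $\Sigma$, finite state set $S$, $s_0\in S$, and a finite set $\delta\subseteq S\times\mathbb{N}^\Sigma\times\mathbb{N}^S$ of transitions $\tau=(s,a,t)$ ($\mathrm{source}(\tau)=s$, $\mathrm{out}(\tau)=a$, $\mathrm{target}(\tau)=t$); every state is the source of some transition, and every transition has $|a|\le1$, $|t|\le2$. It is regular if $|t|\le1$ for all transitions. For $D\in\mathbb{N}^\delta$ let $\mathrm{source}(D)(s)=\sum_{\mathrm{source}(\tau)=s}D(\tau)$, $\mathrm{target}(D)=\sum_\tau D(\tau)\mathrm{target}(\tau)$, $\mathrm{supp}(D)=\{s:\mathrm{source}(D)(s)>0\}$. $D$ is connected from $s$ if every $t\in\mathrm{supp}(D)$ equals $s$ or is reachable by transitions $\tau_1,\ldots,\tau_m$ with $D(\tau_i)>0$, $\mathrm{source}(\tau_1)=s$, $\mathrm{source}(\tau_{i+1})\in\mathrm{target}(\tau_i)$, $t\in\mathrm{target}(\tau_m)$. $D$ is a cycle from $s$ if it is connected from $s$ and $\mathrm{source}(D)=\mathrm{target}(D)$; a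 cycle is a cycle from some state. $D$ is a run if it is connected from $s_0$ and $\mathrm{source}(D)=\mathrm{target}(D)+\{s_0\}$. A simple cycle is a nonzero cycle that cannot be written as a sum of smaller nonzero cycles. *)

(* Defs.v *)
From mathcomp Require Import all_boot.
Set Implicit Arguments. Unset Strict Implicit. Unset Printing Implicit Defensive.

Definition vsize (X : finType) (v : X -> nat) : nat := \sum_(x : X) v x.
Definition vmax (X : finType) (v : X -> nat) : nat := \max_(x : X) v x.

(* The finite set of transitions delta is represented
   by a finite type [Tr] of transitions together with an injective map
   tau |-> (source tau, out tau, target tau) into S x N^Sigma x N^S. *)
Record grammar := Grammar {
  Sig : finType;
  St : finType;
  s0 : St;
  Tr : finType;
  source : Tr -> St;
  out : Tr -> {ffun Sig -> nat};
  target : Tr -> {ffun St -> nat};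
  trans_inj : injective (fun tau => (source tau, out tau, target tau));
  every_state_source : forall s : St, exists tau : Tr, source tau = s;
  out_small : forall tau, vsize (out tau) <= 1;
  target_small : forall tau, vsize (target tau) <= 2
}.

Section Defs.
Variable G : grammar.

Definition regular : Prop := forall tau : Tr G, vsize (target tau) <= 1.

Definition ndelta : nat := #|Tr G|.

Definition tvec := {ffun Tr G -> nat}.

Definition sourceD (D : tvec) : {ffun St G -> nat} :=
  [ffun s => \sum_(tau : Tr G | source tau == s) D tau].
Definition targetD (D : tvec) : {ffun St G -> nat} :=
  [ffun s => \sum_(tau : Tr G) D tau * target tau s].
Definition supp (D : tvec) : {set St G} := [set s | 0 < sourceD D s].

Definition stepD (D : tvec) : rel (St G) :=
  fun s t => [exists tau : Tr G, [&& 0 < D tau, source tau == s & 0 < target tau t]].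

Definition connected_from (D : tvec) (s : St G) : Prop :=
  forall t, t \in supp D -> connect (stepD D) s t.

Definition cycle_from (D : tvec) (s : St G) : Prop :=
  connected_from D s /\ sourceD D = targetD D.
Definition is_cycle (D : tvec) : Prop := exists s, cycle_from D s.

Definition is_run (D : tvec) : Prop :=
  connected_from D (s0 G) /\
  sourceD D = [ffun s => targetD D s + (s == s0 G)].

Definition simple_cycle (C : tvec) : Prop :=
  is_cycle C /\ C != [ffun => 0] /\
  ~ (exists cs : seq tvec,
       [/\ 2 <= size cs,
           (forall C', C' \in cs -> is_cycle C' /\ C' != [ffun => 0]) &
           C = [ffun tau => \sum_(C' <- cs) C' tau]]).

End Defs.

(* Main.v *)
Require Import Defs.
From mathcomp Require Import all_boot.
From mathcomp Require Import zify.
From Stdlib Require Import Classical.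
Set Implicit Arguments. Unset Strict Implicit. Unset Printing Implicit Defensive.

Lemma sum_source (G : grammar) (X : tvec G) (P : pred (St G)) :
  \sum_(u | P u) sourceD X u = \sum_(e : Tr G) X e * P (source e).
Proof.
rewrite /sourceD.
under eq_bigr do rewrite ffunE big_mkcond.
rewrite exchange_big /=; apply: eq_bigr => e _.
case Pe: (P (source e)).
  rewrite (bigD1 (source e)) //= eqxx big1 ?addn0 ?muln1 // => u /andP[_ Hu].
  by rewrite eq_sym (negbTE Hu).
rewrite muln0 big1 // => u Pu; case: eqP => // E; by rewrite E Pu in Pe.
Qed.

Lemma sum_target (G : grammar) (X : tvec G) (P : pred (St G)) :
  \sum_(u | P u) targetD X u = \sum_(e : Tr G) X e * \sum_(u | P u) target e u.
Proof.
rewrite /targetD.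
under eq_bigr do rewrite ffunE.
rewrite exchange_big /=; apply: eq_bigr => e _.
by rewrite big_distrr.
Qed.

Lemma sum_sourceT (G : grammar) (X : tvec G) :
  \sum_u sourceD X u = \sum_(e : Tr G) X e.
Proof. rewrite (sum_source X predT); apply: eq_bigr => e _; by rewrite muln1. Qed.

Lemma sum_targetT (G : grammar) (X : tvec G) :
  \sum_u targetD X u = \sum_(e : Tr G) X e * vsize (target e).
Proof. exact: (sum_target X predT). Qed.

Lemma L_eq (I : finType) (f g : I -> nat) :
  (forall i, f i <= g i) -> \sum_i g i <= \sum_i f i -> forall i, f i = g i.
Proof.
move=> Hle Hs.
have E : \sum_i g i = \sum_i f i + \sum_i (g i - f i).
  by rewrite -big_split /=; apply: eq_bigr => i _; rewrite subnKC.
have : \sum_i (g i - f i) == 0 by lia.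
rewrite sum_nat_eq0 => /forallP H i.
have := H i; have := Hle i; lia.
Qed.

Lemma sum_eqx (T : finType) (A : pred T) (x : T) :
  \sum_(u | A u) (x == u) = A x.
Proof.
case Ax: (A x).
  rewrite (bigD1 x) //= eqxx big1 // => u /andP[_ Hu]; by rewrite eq_sym (negbTE Hu).
rewrite big1 // => u Au; case: eqP => // E; by rewrite E Au in Ax.
Qed.

Lemma bal_t1 (G : grammar) (X : tvec G) : regular G -> sourceD X = targetD X ->
  forall e, X e * vsize (target e) = X e.
Proof.
move=> Hreg Hb.
apply: (L_eq (f := fun e => X e * vsize (target e)) (g := fun e => X e)).
  move=> e; have := Hreg e; case: (vsize (target e)) => [|[]] //; lia.
by rewrite -sum_sourceT -sum_targetT Hb.
Qed.

Lemma vsize_lt (G : grammar) (C C' : tvec G) :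
  (forall e, C' e <= C e) -> C' <> C -> vsize C' < vsize C.
Proof.
move=> Hle Hne; rewrite ltnNge; apply/negP => Hs.
apply: Hne; apply/ffunP => e; exact: (L_eq (f := C') (g := C) Hle Hs).
Qed.

Lemma min_exists (G : grammar) (P : tvec G -> Prop) (C : tvec G) : P C ->
  exists C0, P C0 /\ (forall C', P C' -> (forall e, C' e <= C0 e) -> C' = C0).
Proof.
have: forall m (C : tvec G), vsize C < m -> P C ->
  exists C0, P C0 /\ (forall C', P C' -> (forall e, C' e <= C0 e) -> C' = C0).
  elim=> [//|m IH] C1 Hm PC1.
  case: (classic (exists C', [/\ P C', (forall e, C' e <= C1 e) & C' <> C1])).
    move=> [C' [PC' Hle Hne]]; apply: (IH C') => //.
    have := vsize_lt Hle Hne; lia.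
  move=> Hno; exists C1; split => // C' PC' Hle.
  apply: NNPP => Hne; apply: Hno; by exists C'.
by move=> H PC; apply: (H (vsize C).+1 C).
Qed.

Definition Kset (G : grammar) (n : nat) (D : tvec G) (C : tvec G) : Prop :=
  [/\ C != [ffun => 0], sourceD C = targetD C, forall e, C e <= 1 &
      forall e, 0 < C e -> n < D e].

Lemma nonzero_ex (G : grammar) (C : tvec G) : C != [ffun => 0] -> exists e, 0 < C e.
Proof.
move=> Hne; apply: NNPP => Hn; move/negP: Hne; apply; apply/eqP/ffunP => e.
rewrite ffunE; case: (posnP (C e)) => // Hp; exfalso; apply: Hn; by exists e.
Qed.

Lemma sum_pos_ex (I : finType) (P : pred I) (F : I -> nat) :
  0 < \sum_(i | P i) F i -> exists i, P i /\ 0 < F i.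
Proof.
move=> Hs; apply: NNPP => Hn; move: Hs; rewrite big1 // => i Pi.
case: (posnP (F i)) => // Hp; exfalso; apply: Hn; by exists i.
Qed.

Lemma K_min_simple (G : grammar) (n : nat) (D C : tvec G) : regular G ->
  Kset n D C -> (forall C', Kset n D C' -> (forall e, C' e <= C e) -> C' = C) ->
  simple_cycle C.
Proof.
move=> Hreg [Hnz Hb Hle1 HD] Hmin.
have Ht1 := bal_t1 Hreg Hb.
have [e0 He0] := nonzero_ex Hnz.
set s := source e0.
set R : tvec G := [ffun e => if connect (stepD C) s (source e) then C e else 0].
have RleC : forall e, R e <= C e by move=> e; rewrite ffunE; case: ifP.
have KR : Kset n D R.
  split.
  - apply/eqP => /ffunP /(_ e0); rewrite !ffunE connect0; lia.
  - apply/ffunP => u; symmetry.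
    apply: (L_eq (f := fun u => targetD R u) (g := fun u => sourceD R u)); last first.
      rewrite sum_sourceT sum_targetT; apply: leq_sum => e _.
      rewrite ffunE; case: ifP => _; last by rewrite mul0n.
      by rewrite Ht1.
    move=> v /=; case Hsv: (connect (stepD C) s v).
      apply: (@leq_trans (targetD C v)).
        rewrite !ffunE; apply: leq_sum => e _; apply: leq_mul => //.
      rewrite -Hb !ffunE leq_eqVlt; apply/orP; left; apply/eqP.
      apply: eq_bigr => e /eqP He; by rewrite ffunE He Hsv.
    rewrite ffunE big1 // => e _; rewrite ffunE; case: ifP => Hc; last by rewrite mul0n.
    case: (posnP (target e v)) => Htv; first by rewrite Htv muln0.
    case: (posnP (C e)) => HCe; first by rewrite HCe mul0n.
    exfalso; move/negP: Hsv; apply; apply: (connect_trans Hc); apply: connect1.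
    apply/existsP; exists e; by rewrite HCe eqxx Htv.
  - move=> e; exact: leq_trans (RleC e) (Hle1 e).
  - move=> e He; apply: HD; exact: leq_trans He (RleC e).
have RC := Hmin R KR RleC.
split.
  exists s; split => // t; rewrite inE ffunE => /sum_pos_ex [e [/eqP Hst HCe]].
  have : 0 < R e by rewrite RC.
  rewrite ffunE; case: ifP => // Hc _; by rewrite -Hst.
split => //.
move=> [cs [Hsz Hcs HC]].
case: cs Hsz Hcs HC => [|C1 [|C2 rest]] //= _ Hcs HC.
have [H1c H1nz] := Hcs C1 (mem_head _ _).
have [H2c H2nz] : is_cycle C2 /\ C2 != [ffun => 0] by apply: Hcs; rewrite !inE eqxx orbT.
have HCe : forall e, C e = C1 e + (C2 e + \sum_(C' <- rest) C' e).
  by move=> e; rewrite HC ffunE !big_cons.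
have C1le : forall e, C1 e <= C e by move=> e; rewrite HCe leq_addr.
have KC1 : Kset n D C1.
  split => //.
  - by case: H1c => x [].
  - move=> e; exact: leq_trans (C1le e) (Hle1 e).
  - move=> e He; apply: HD; exact: leq_trans He (C1le e).
have E1 := Hmin C1 KC1 C1le.
have [e2 He2] := nonzero_ex H2nz.
have := HCe e2; rewrite E1; lia.
Qed.

Definition Pb (G : grammar) (n : nat) (D : tvec G) (W : {set St G}) : bool :=
  (W != set0) && [forall u in W, [exists e, [&& n < D e, source e == u &
                                             [exists w in W, 0 < target e w]]]].

Lemma W_to_K (G : grammar) (n : nat) (D : tvec G) (W1 : {set St G}) :
  regular G -> Pb n D W1 -> exists C, Kset n D C.
Proof.
move=> Hreg PW1.
have exm : exists m, [exists W : {set St G}, (#|W| == m) && Pb n D W].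
  by exists #|W1|; apply/existsP; exists W1; rewrite eqxx PW1.
case: (ex_minnP exm) => m /existsP [W /andP [/eqP Hcard PW]] Hmin.
move: (PW) => /andP [/set0Pn [u0 Hu0] /forallP Hall].
have Hall' : forall u, u \in W -> exists e, [&& n < D e, source e == u &
                                             [exists w in W, 0 < target e w]].
  by move=> u Hu; have := Hall u; rewrite Hu /= => /existsP.
have [tau0 _] := Hall' u0 Hu0.
pose spec e u := [&& n < D e, source e == u & [exists w in W, 0 < target e w]].
pose e_of u := odflt tau0 [pick e | spec e u].
have Hspec : forall u, u \in W -> spec (e_of u) u.
  move=> u Hu; rewrite /e_of; case: pickP => [e //|Hn].
  have [e He] := Hall' u Hu; move: (Hn e); rewrite /spec He; by [].
pose W' := [set s in W | [exists u in W, 0 < target (e_of u) s]].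
have W'sub : W' \subset W by apply/subsetP => s; rewrite inE => /andP[].
have PW' : Pb n D W'.
  apply/andP; split.
    have := Hspec u0 Hu0 => /and3P [_ _ /existsP [w /andP [Hw Htw]]].
    apply/set0Pn; exists w; rewrite inE Hw; apply/existsP; exists u0; by rewrite Hu0.
  apply/forallP => y; apply/implyP; rewrite inE => /andP [Hy _].
  have := Hspec y Hy => /and3P [HD Hs /existsP [w /andP [Hw Htw]]].
  apply/existsP; exists (e_of y); rewrite HD Hs /=; apply/existsP; exists w.
  rewrite Htw inE Hw andbT /=; apply/existsP; exists y; by rewrite Hy.
have Hm : m <= #|W'| by apply: Hmin; apply/existsP; exists W'; rewrite eqxx PW'.
have EW : W' = W by apply/eqP; rewrite eqEcard W'sub /= Hcard.
have Hsurj : forall s, s \in W -> exists2 u, u \in W & 0 < target (e_of u) s.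
  move=> s; rewrite -{1}EW inE => /andP [_ /existsP [u /andP [Hu Ht]]]; by exists u.
pose E := [set e_of u | u in W].
pose X : tvec G := [ffun e => nat_of_bool (e \in E)].
have HX : forall e, 0 < X e -> exists2 u, u \in W & e = e_of u.
  move=> e; rewrite ffunE; case: (boolP (e \in E)) => // /imsetP [u Hu ->] _; by exists u.
have srcE : forall s e, e \in E -> source e == s -> s \in W /\ e = e_of s.
  move=> s e /imsetP [u Hu ->] /eqP Hs.
  have := Hspec u Hu => /and3P [_ /eqP Hsu _]; rewrite -Hs Hsu; by split.
exists X; split.
- apply/eqP => /ffunP /(_ (e_of u0)); rewrite !ffunE imset_f //.
- apply/ffunP => s.
  apply: (L_eq (f := fun s => sourceD X s) (g := fun s => targetD X s)); last first.
    rewrite sum_sourceT sum_targetT; apply: leq_sum => e _.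
    have := Hreg e; case: (vsize (target e)) => [|[]] //; lia.
  move=> v /=; case: (boolP (v \in W)) => Hv.
    have [u Hu Htu] := Hsurj v Hv.
    apply: (@leq_trans 1).
      rewrite ffunE (bigD1 (e_of v)); last by have := Hspec v Hv => /and3P [].
      rewrite big1 ?addn0 ?ffunE //; first by case: (_ \in _).
      move=> e /andP [Hse Hne]; rewrite ffunE; case: (boolP (e \in E)) => // HeE.
      have [_ Hee] := srcE v e HeE Hse; by rewrite Hee eqxx in Hne.
    rewrite ffunE (bigD1 (e_of u)) // ffunE imset_f //=; lia.
  rewrite ffunE big1 // => e Hse; rewrite ffunE; case: (boolP (e \in E)) => // HeE.
  have [Hv' _] := srcE v e HeE Hse; by rewrite Hv' in Hv.
- move=> e; rewrite ffunE; by case: (_ \in _).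
- move=> e /HX [u Hu ->]; by have := Hspec u Hu => /and3P [].
Qed.

Lemma exists_K (G : grammar) (n : nat) (D : tvec G) (tau : Tr G) :
  regular G -> is_run D -> 1 + n * ndelta G < D tau -> exists C, Kset n D C.
Proof.
move=> Hreg [Hconn Hbal0] Htau.
have Hcard : 0 < ndelta G by apply/card_gt0P; exists tau.
have Hntau : n < D tau by nia.
have bal : forall s, sourceD D s = targetD D s + (s == s0 G).
  by move=> s; rewrite Hbal0 ffunE.
pose hstep : rel (St G) :=
  fun u x => [exists e, [&& n < D e, source e == u & 0 < target e x]].
pose v := source tau.
case: (boolP [exists w, (0 < target tau w) && connect hstep w v]).
  move=> /existsP [w /andP [Htw Hwv]].
  pose W := [set u | connect hstep w u && connect hstep u v].
  have HwW : w \in W by rewrite inE connect0 Hwv.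
  apply: (@W_to_K G n D W Hreg); apply/andP; split.
    apply/set0Pn; exists v; by rewrite inE Hwv connect0.
  apply/forallP => u; apply/implyP; rewrite inE => /andP [Hwu Huv].
  case: (eqVneq u v) => [->|Hne].
    apply/existsP; exists tau; rewrite Hntau eqxx /=; apply/existsP; exists w.
    by rewrite HwW Htw.
  move/connectP: Huv => [[|x p] /= Hp Hl]; first by rewrite Hl eqxx in Hne.
  move/andP: Hp => [Hux Hp].
  move/existsP: (Hux) => [e /and3P [HDe Hse Hte]].
  apply/existsP; exists e; rewrite HDe Hse /=; apply/existsP; exists x.
  rewrite Hte inE andbT (connect_trans Hwu (connect1 Hux)) /=.
  apply/connectP; by exists p.
move=> HB; exfalso.
pose U := [set u | connect hstep u v].
have HvU : v \in U by rewrite inE connect0.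
pose a e := nat_of_bool (source e \in U).
pose b e := \sum_(u | u \in U) target e u.
have Ha : \sum_(u | u \in U) sourceD D u = \sum_e D e * a e by exact: sum_source.
have Hb : \sum_(u | u \in U) targetD D u = \sum_e D e * b e by exact: sum_target.
have Hc : \sum_(u | u \in U) nat_of_bool (u == s0 G) <= 1.
  rewrite (eq_bigr (fun u => nat_of_bool (s0 G == u))); last by move=> u _; rewrite eq_sym.
  rewrite (sum_eqx (fun u => u \in U)); by case: (_ \in _).
have Hsum : \sum_(u | u \in U) sourceD D u =
            \sum_(u | u \in U) targetD D u + \sum_(u | u \in U) nat_of_bool (u == s0 G).
  by rewrite -big_split /=; apply: eq_bigr => u _; rewrite bal.
have b1 : forall e, b e <= 1.
  move=> e; apply: leq_trans (Hreg e); rewrite /b /vsize.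
  rewrite [X in _ <= X](bigID (fun u => u \in U)) /=; exact: leq_addr.
have bpos : forall e, 0 < b e -> exists u, u \in U /\ 0 < target e u.
  move=> e; exact: sum_pos_ex.
have Hbt : b tau = 0.
  case: (posnP (b tau)) => // /bpos [u [HuU Htu]].
  exfalso; move/negP: HB; apply; apply/existsP; exists u.
  by rewrite Htu; rewrite inE in HuU.
have Hat : a tau = 1 by rewrite /a HvU.
have Hpe : forall e, (e == tau) * D e + D e * b e <= D e * a e + n.
  move=> e; case: (eqVneq e tau) => [->|Hne].
    rewrite Hbt Hat; lia.
  rewrite mul0n add0n.
  case: (posnP (b e)) => [->|Hbp]; first by rewrite muln0.
  have -> : b e = 1 by have := b1 e; lia.
  case HU: (source e \in U); first by rewrite /a HU; lia.
  rewrite /a HU.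
  case: (leqP (D e) n) => [Hle|Hlt]; first lia.
  have [u [HuU Htu]] := bpos e Hbp.
  have : source e \in U.
    rewrite inE in HuU; rewrite inE; apply: connect_trans (connect1 _) HuU.
    apply/existsP; exists e; by rewrite Hlt eqxx Htu.
  by rewrite HU.
have Htot : \sum_(e : Tr G) ((e == tau) * D e + D e * b e)
        <= \sum_(e : Tr G) (D e * a e + n) by apply: leq_sum => e _; exact: Hpe.
rewrite !big_split /= sum_nat_const -/(ndelta G) in Htot.
rewrite (bigD1 tau) //= eqxx mul1n big1 ?addn0 in Htot; last first.
  by move=> e /negbTE ->.
rewrite -Ha Hsum Hb in Htot.
rewrite mulnC in Htot.
lia.
Qed.

Lemma pos_sum_iff (I : finType) (P : pred I) (F1 F2 : I -> nat) :
  (forall i, (0 < F1 i) = (0 < F2 i)) ->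
  (0 < \sum_(i | P i) F1 i) = (0 < \sum_(i | P i) F2 i).
Proof.
move=> H; rewrite !lt0n !sum_nat_eq0; congr negb; apply: eq_forallb => i.
move: (H i); rewrite !lt0n; by case: (F1 i == 0); case: (F2 i == 0).
Qed.

Theorem lemma5 (G : grammar) (n : nat) (D : tvec G) :
  regular G -> is_run D -> 1 + n * ndelta G < vmax D ->
  exists (D1 C : tvec G),
    [/\ D = [ffun tau => D1 tau + n * C tau],
        is_run D1, simple_cycle C & supp D1 = supp D].
Proof.
move=> Hreg Hrun Hmax.
have [tau Htau] : exists tau, 1 + n * ndelta G < D tau.
  apply: NNPP => Hn; move: Hmax; rewrite ltnNge => /negP; apply.
  apply/bigmax_leqP => e _; rewrite leqNgt; apply/negP => He; apply: Hn; by exists e.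
have [C0 KC0] := exists_K Hreg Hrun Htau.
have [C [KC Hmin]] := min_exists KC0.
have Hs := K_min_simple Hreg KC Hmin.
case: KC => [Hnz HbC Hle1 HDC].
have nCle : forall e, n * C e <= D e.
  move=> e; case: (posnP (C e)) => [->|Hp]; first by rewrite muln0.
  have := Hle1 e; have := HDC e Hp; nia.
pose D1 : tvec G := [ffun e => D e - n * C e].
have HD : D = [ffun e => D1 e + n * C e].
  by apply/ffunP => e; rewrite !ffunE subnK.
have Hpos : forall e, (0 < D1 e) = (0 < D e).
  move=> e; rewrite ffunE; case: (posnP (C e)) => [->|Hp]; first by rewrite muln0 subn0.
  have := Hle1 e; have := HDC e Hp; move=> H1 H2.
  have : C e = 1 by lia.
  move=> ->; rewrite muln1; apply/idP/idP; lia.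
have Hsrc : forall s, sourceD D s = sourceD D1 s + n * sourceD C s.
  move=> s; rewrite !ffunE big_distrr -big_split /=; apply: eq_bigr => e _.
  by rewrite {1}HD ffunE.
have Htgt : forall s, targetD D s = targetD D1 s + n * targetD C s.
  move=> s; rewrite !ffunE big_distrr -big_split /=; apply: eq_bigr => e _.
  by rewrite {1}HD ffunE mulnDl mulnA.
have Hstep : stepD D1 =2 stepD D.
  move=> x y; rewrite /stepD; apply: eq_existsb => e; by rewrite Hpos.
have Hsupp : supp D1 = supp D.
  apply/setP => s; rewrite !inE !ffunE; exact: pos_sum_iff.
exists D1, C; split => //.
case: Hrun => Hconn Hbal; split.
  move=> t; rewrite Hsupp (eq_connect Hstep); exact: Hconn.
apply/ffunP => s; rewrite ffunE.
have := Hsrc s; have := Htgt s; rewrite Hbal ffunE HbC; lia.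
Qed.
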